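(* LCP-aware insertion sort, as described in the context, sorts any sequence of $n$ strings with common prefix length $\bar h$ and computes its LCP array $H$; it performs at most $L(H)+\frac{n(n-1)}{2}$ character comparisons and runs in $O(D+n^2)$ time.
   Context: Strings are zero-terminated finite sequences over a totally ordered alphabet, ordered lexicographically; $\mathrm{lcp}(s,t)$ is the length of their longest common prefix. For a sorted sequence $s_1\le\dots\le s_n$ its LCP array is $H=(\bot,h_2,\dots,h_n)$, $h_i=\mathrm{lcp}(s_{i-1},s_i)$, and $L(H)=\sum_{i\ge2}h_i$. $D$ is the distinguishing prefix size: the sum over the strings of the length of the shortest prefix not shared by any other string of the input ($D\ge L(H)$). LCP-aware insertion sort: for $j=1,\dots,n$ the string $x=s_j$ is inserted into the already sorted prefix $s_1,\dots,s_{j-1}$ (whose LCP array is maintained) by scanning positions from the right while shifting elements (and their LCP entries) one place to the right. The scan maintains $h'$, the known LCP of $x$ with the element $t$ immediately to its right in the final order so far (initially $h'=\bar h$, with no element to the right). At each step let $u$ be the next element to the left, with stored LCP $g=\mathrm{lcp}(u,t)$ ($t$ the element just passed). If there is no such $u$, insert $x$ at the front. If $g<h'$: $x>u$, so $x$ is inserted between $u$ and $t$, with LCP entries $\mathrm{lcp}(u,x)=g$ and $\mathrm{lcp}(x,t)=h'$. If $g>h'$: $x<u$ without character comparisons; $u$ is shifted right and the scan continues with $h'$ unchanged. If $g=h'$: characters of $x$ and $u$ are compared from position $h'+1$ on, increasing the common length $h''$ while they are equal and not the terminator; if then $x\ge u$, insert $x$ between $u$ and $t$ with LCP entries $h''$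 (to $u$) and the old $h'$ (to $t$); otherwise shift $u$ right and continue with $h':=h''$. Counting convention: each character comparison yielding equality counts one, and the final mismatch test together with the $\ge$ test counts one; no other comparisons are character comparisons. *)

(* Defs.v *)
From mathcomp Require Import all_boot all_order.
Set Implicit Arguments. Unset Strict Implicit. Unset Printing Implicit Defensive.
Import Order.TTheory.
Local Open Scope order_scope.

Section Strings.
Context {disp : Order.disp_t} {T : orderType disp}.

(* A string is a seq T; the zero terminator is implicit: position i >= size s
   holds the terminator, which is smaller than every character of T. *)
Notation str := (seq T).

(* lexicographic order (a proper prefix is smaller, since the terminator is
   the least character) *)
Fixpoint lexle (s t : str) : bool :=
  match s, t with
  | [::], _ => true
  | _ :: _, [::] => false
  | a :: s', b :: t' => (a < b) || ((a == b) && lexle s' t')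
  end.

Fixpoint lcp (s t : str) : nat :=
  match s, t with
  | a :: s', b :: t' => if a == b then (lcp s' t').+1 else 0
  | _, _ => 0
  end.

(* LCP array H = (bot, h_2, ..., h_n); bot is None *)
Definition lcp_array (s : seq str) : seq (option nat) :=
  match s with
  | [::] => [::]
  | a :: s' => None :: [seq Some h | h <- pairmap lcp a s']
  end.

Definition Lsum (s : seq str) : nat :=
  match s with
  | [::] => 0
  | a :: s' => sumn (pairmap lcp a s')
  end.

(* distinguishing prefix size D: for each string, the length of its shortest
   prefix not shared by any other string of the input (= 1 + max lcp with the
   other strings, counting the terminator if needed) *)
Definition Dsize (ss : seq str) : nat :=
  \sum_(i < size ss)
     (\max_(j < size ss | j != i) lcp (nth [::] ss i) (nth [::] ss j)).+1.

(* Returns (k, ge): k = number of equal, non-terminator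
   character pairs met; ge = (x >= u) decided by the final mismatch test. *)
Fixpoint cmpsuf (xs us : str) : nat * bool :=
  match xs, us with
  | a :: xs', b :: us' =>
      if a == b then let: (k, ge) := cmpsuf xs' us' in (k.+1, ge)
      else (0, b < a)
  | [::], _ => (0, us == [::])
  | _ :: _, [::] => (0, true)
  end.

Definition setfirst (p : seq (str * option nat)) (h : nat) :=
  match p with
  | [::] => [::]
  | (t, _) :: p' => (t, Some h) :: p'
  end.

(* One insertion.  rl = the not yet scanned part of the sorted prefix, in
   reverse order (head = next element u to the left), each element paired
   with its stored LCP entry (LCP with its left neighbour, None = bot).
   passed = already scanned (shifted) elements in sorted order, head = t.
   h' = known lcp(x,t); g = stored lcp(u,t) (when there is no t, g = hbar,
   which forces a character comparison starting at hbar).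
   Returns (new sorted list with LCP entries, #char comparisons, #steps). *)
Fixpoint ins (x : str) (h' g : nat) (rl passed : seq (str * option nat))
    (cmp steps : nat) : seq (str * option nat) * nat * nat :=
  match rl with
  | [::] => ((x, None) :: setfirst passed h', cmp, steps.+1)
  | (u, e) :: rl' =>
      if g < h' then
        (rev rl ++ (x, Some g) :: setfirst passed h', cmp, steps.+1)
      else if h' < g then
        ins x h' (odflt 0 e) rl' ((u, e) :: passed) cmp steps.+1
      else
        let: (k, ge) := cmpsuf (drop h' x) (drop h' u) in
        if ge then
          (rev rl ++ (x, Some (h' + k)) :: setfirst passed h',
           cmp + k.+1, steps.+1)
        else
          ins x (h' + k) (odflt 0 e) rl' ((u, e) :: passed)
              (cmp + k.+1) steps.+1
  end.

Definition isort_step (hbar : nat)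
    (st : seq (str * option nat) * nat * nat) (x : str) :=
  let: (l, c, s) := st in
  let: (l', c', s') := ins x hbar hbar (rev l) [::] 0 0 in
  (l', c + c', s + s').

Definition lcp_isort (hbar : nat) (ss : seq str) :=
  foldl (isort_step hbar) ([::], 0, 0) ss.

End Strings.

(* Main.v *)
Require Import Defs.
From mathcomp Require Import all_boot all_order.
From mathcomp Require Import zify.
Set Implicit Arguments. Unset Strict Implicit. Unset Printing Implicit Defensive.
Import Order.TTheory.

Section S.
Context {disp : Order.disp_t} {T : orderType disp}.
Notation str := (seq T).

Lemma lcpC (a b : str) : lcp a b = lcp b a.
Proof.
elim: a b => [|x a IH] [|y b] //=.
by rewrite eq_sym; case: eqP => // _; rewrite IH.
Qed.

Lemma lcp_ultra (a b c : str) : minn (lcp a b) (lcp b c) <= lcp a c.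
Proof.
elim: a b c => [|x a IH] [|y b] [|z c] //=; try by rewrite ?minn0 ?min0n.
case: (eqVneq x y) => [<-|_]; last by rewrite min0n.
case: (x == z); last by rewrite minn0.
rewrite minnSS ltnS; exact: IH.
Qed.

Lemma lexle_refl (a : str) : lexle a a.
Proof. by elim: a => //= x a ->; rewrite eqxx orbT. Qed.

Lemma lexle_trans (a b c : str) : lexle a b -> lexle b c -> lexle a c.
Proof.
elim: a b c => [|x a IH] [|y b] [|z c] //=.
case/orP=> [xy|/andP[/eqP-> ab]]; case/orP=> [yz|/andP[/eqP<- bc]].
- by rewrite (lt_trans xy yz).
- by rewrite xy.
- by rewrite yz.
- by rewrite eqxx (IH _ _ ab bc) orbT.
Qed.

Lemma lexle_total (a b : str) : lexle a b || lexle b a.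
Proof.
elim: a b => [|x a IH] [|y b] //=.
case: (ltgtP x y) => //= ->; by rewrite eqxx /=.
Qed.

Lemma lexle_totalN (a b : str) : ~~ lexle a b -> lexle b a.
Proof. by have := lexle_total a b; case: (lexle a b). Qed.

Lemma lemA (x t u : str) : lexle x t -> lcp x t < lcp u t -> lexle x u.
Proof.
elim: x t u => [|a x IH] [|b t] [|c u] //=.
case: (eqVneq c b) => [->|]; last by [].
case/orP=> [->//|/andP[/eqP-> xt]]; rewrite eqxx ltnS => lt.
by rewrite (IH _ _ xt lt) orbT.
Qed.

Lemma lemB (u t x : str) : lexle u t -> lcp u t < lcp x t -> lexle u x.
Proof.
elim: u t x => [|c u IH] [|b t] [|a x] //=.
case: (eqVneq a b) => [->|]; last by [].
case/orP=> [->//|/andP[/eqP-> ut]]; rewrite eqxx ltnS => lt.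
by rewrite (IH _ _ ut lt) orbT.
Qed.

Lemma cmpsuf_spec (a b : str) : cmpsuf a b = (lcp a b, lexle b a).
Proof.
elim: a b => [|x a IH] [|y b] //=.
idtac.
case: (eqVneq x y) => [->|ne]; first by rewrite IH ?eqxx ltxx.
by rewrite ?eq_sym ?(negbTE ne) /= ?orbF; case: eqVneq ne => //= ->; rewrite eqxx.
Qed.

Lemma lcp_drop h (a b : str) : h <= lcp a b ->
  lcp (drop h a) (drop h b) = lcp a b - h /\ lexle (drop h b) (drop h a) = lexle b a.
Proof.
elim: h a b => [|h IH] a b; first by rewrite !drop0 subn0.
case: a => [|x a]; case: b => [|y b] //=.
case: (eqVneq x y) => [->|] //; rewrite ltnS => /IH[-> ->].
by rewrite subSS ?eqxx ltxx.
Qed.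


Fixpoint okarr (p : option str) (l : seq (str * option nat)) : bool :=
  match l with
  | [::] => true
  | (s, e) :: l' => (e == omap (fun u => lcp u s) p) && okarr (Some s) l'
  end.

Lemma okarr_some u l :
  okarr (Some u) l = (map snd l == [seq Some h | h <- pairmap lcp u (map fst l)]).
Proof.
elim: l u => [|[s e] l IH] u //=.
by rewrite IH eqseq_cons.
Qed.

Lemma okarrE l : (map snd l = lcp_array (map fst l)) <-> okarr None l.
Proof.
case: l => [|[s e] l] //=.
rewrite okarr_some; split.
  by case=> -> ->; rewrite !eqxx.
by case/andP=> /eqP-> /eqP->.
Qed.

Lemma okarr_cat p A u e R :
  okarr p (A ++ (u, e) :: R) = okarr p (rcons A (u, e)) && okarr (Some u) R.
Proof.
elim: A p => [|[s f] A IH] p /=; first by rewrite andbT.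
by rewrite IH andbA.
Qed.

Lemma Lsum_cons2 (a b : str) w : Lsum (a :: b :: w) = lcp a b + Lsum (b :: w).
Proof. by []. Qed.

Lemma Lsum_split_aux (y : str) s u w :
  Lsum (y :: s ++ u :: w) = Lsum (y :: rcons s u) + Lsum (u :: w).
Proof.
elim: s y => [|z s IH] y /=; first by rewrite addn0.
by rewrite -addnA -IH.
Qed.

Lemma Lsum_split (s : seq str) u w :
  Lsum (s ++ u :: w) = Lsum (rcons s u) + Lsum (u :: w).
Proof. by case: s => [|y s] //; rewrite cat_cons Lsum_split_aux. Qed.

Lemma mid_ok (A B : seq (str * option nat)) u e t et x :
  let old := A ++ (u, e) :: (t, et) :: B in
  let res := A ++ (u, e) :: (x, Some (lcp u x)) :: (t, Some (lcp x t)) :: B in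
  okarr None old -> sorted lexle (map fst old) -> lexle u x -> lexle x t ->
  [/\ okarr None res, sorted lexle (map fst res),
      perm_eq (map fst res) (x :: map fst old)
    & Lsum (map fst res) + lcp u t = Lsum (map fst old) + lcp u x + lcp x t].
Proof.
move=> old res; rewrite /old /res !okarr_cat /= !map_cat /= !sorted_cat_cons /=.
move=> /and3P[-> _ ->] /and3P[-> ut ->] ux xt.
rewrite !eqxx ux xt; split => //.
  set M := [seq i.1 | i <- A]; set N := [seq i.1 | i <- B].
  have -> : M ++ [:: u, x, t & N] = (M ++ [:: u]) ++ x :: t :: N by rewrite -catA.
  have -> : x :: M ++ [:: u, t & N] = [:: x] ++ (M ++ [:: u]) ++ t :: N by rewrite -catA.
  by rewrite (perm_catCA (M ++ [:: u]) [:: x] (t :: N)).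
rewrite !Lsum_split !Lsum_cons2; lia.
Qed.


Lemma sorted_cons2 (a b : str) w :
  sorted lexle (a :: b :: w) = lexle a b && sorted lexle (b :: w).
Proof. by []. Qed.

Lemma ins_ok x rl : forall passed h' g cmp steps res cmp' steps' t et P',
  passed = (t, et) :: P' ->
  okarr None (rev rl ++ passed) -> sorted lexle (map fst (rev rl ++ passed)) ->
  lexle x t -> h' = lcp x t ->
  (forall u e rl', rl = (u, e) :: rl' -> g = lcp u t) ->
  cmp <= h' + steps -> steps + size rl = size (rev rl ++ passed) ->
  ins x h' g rl passed cmp steps = (res, cmp', steps') ->
  let l := rev rl ++ passed in
  [/\ perm_eq (map fst res) (x :: map fst l), sorted lexle (map fst res),
   okarr None res,
   cmp' + Lsum (map fst l) <= size l + Lsum (map fst res)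
   & (exists2 y, y \in map fst l & cmp' <= size l + lcp x y)
   /\ steps' <= (size l).+1 /\ 0 < size l].
Proof.
elim: rl => [|[u e] rl IH] passed h' g cmp steps res cmp' steps' t et P' ->
  ok so xt hx hg hc hs.
  rewrite /= in ok so hs *; case=> <- <- <- /=.
  case/andP: ok => _ ok.
  rewrite hx eqxx xt so ok; split => //; first lia.
  split; last lia.
  by exists t; rewrite ?inE ?eqxx //; lia.
rewrite /= rev_cons cat_rcons.
rewrite rev_cons cat_rcons in ok so hs *.
have hg' := hg u e rl erefl.
have hok := ok; rewrite okarr_cat /= in hok; case/and3P: hok => okA /eqP het okB.
have hso := so; rewrite map_cat sorted_cat_cons /= in hso.
case/andP: hso => soA /andP[ut soB].
have hge : forall u' e' rl', rl = (u', e') :: rl' -> odflt 0 e = lcp u' u.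
  move=> u' e' rl' Erl; move: okA; rewrite Erl rev_cons -cats1 cat_rcons okarr_cat /=.
  by case/andP=> _ /andP[/eqP -> _].
have sz : size (rev rl ++ [:: (u, e), (t, et) & P']) = (size rl + size P').+2.
  by rewrite size_cat size_rev /=; lia.
rewrite sz /= in hs.
have LE : forall a b : nat, (a < b)%O = (a < b)%N by [].
rewrite !LE.
case: (ltngtP g h') => [gh|hg2|ghe].
-
  case=> <- <- <-.
  have lux : lcp u x = g.
    have := lcp_ultra u x t; have := lcp_ultra u t x; rewrite (lcpC t x) -hx -hg'.
    lia.
  have ux : lexle u x by apply: (lemB ut); rewrite -hg' -hx.
  have := mid_ok ok so ux xt.
  rewrite lux -hx -hg' => -[r1 r2 r3 r4]; rewrite sz; split => //.
    clear - r4 hc hs; lia.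
  split; last by clear - hs; lia.
  exists t; last by clear - hc hs hx; lia.
  by rewrite map_cat mem_cat /= !inE eqxx !orbT.
-
  move=> E.
  have lxu : lcp x u = h'.
    have := lcp_ultra x u t; have := lcp_ultra x t u; rewrite (lcpC t u) -hx -hg'.
    lia.
  have xu : lexle x u by apply: (lemA xt); rewrite -hx -hg'.
  have := IH ((u, e) :: (t, et) :: P') h' (odflt 0 e) cmp steps.+1 res cmp' steps' u e
    ((t, et) :: P') erefl ok so xu (esym lxu) hge _ _ E.
  have c1 : cmp <= h' + steps.+1 by clear -hc; lia.
  have c2 : steps.+1 + size rl = size (rev rl ++ [:: (u, e), (t, et) & P']) by rewrite sz; clear -hs; lia.
  move=> H; have H' := H c1 c2.
  exact: H'.
-
  move: hg'; rewrite ghe => hg'.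
  have hxu : h' <= lcp x u.
    have := lcp_ultra x t u; rewrite (lcpC t u) -hx -hg' minnn; lia.
  have [e1 e2] := lcp_drop hxu.
  rewrite cmpsuf_spec e1 e2.
  case: ifP => ux.
  + case=> <- <- <-; rewrite cat_rcons.
    have := mid_ok ok so ux xt.
    rewrite -hx -(lcpC x u) -hg' => -[r1 r2 r3 r4].
    have -> : h' + (lcp x u - h') = lcp x u by clear -hxu; lia.
    rewrite sz; split => //.
      clear - r4 hc hs hxu; lia.
    split; last by clear - hs; lia.
    exists u; last by clear - hc hs hxu; lia.
    by rewrite map_cat mem_cat /= !inE eqxx !orbT.
  + move=> E.
    have xu : lexle x u by apply: lexle_totalN; rewrite ux.
    have hh : h' + (lcp x u - h') = lcp x u by clear -hxu; lia.
    have c1 : (cmp + (lcp x u - h').+1) <= h' + (lcp x u - h') + steps.+1 by clear -hc; lia.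
    have c2 : steps.+1 + size rl = size (rev rl ++ [:: (u, e), (t, et) & P']) by rewrite sz; clear -hs; lia.
    have := IH ((u, e) :: (t, et) :: P') (h' + (lcp x u - h')) (odflt 0 e)
      (cmp + (lcp x u - h').+1) steps.+1 res cmp' steps' u e
      ((t, et) :: P') erefl ok so xu hh hge c1 c2 E.
    exact.

Qed.

Lemma first_ok x hbar (l : seq (str * option nat)) res c' s' :
  okarr None l -> sorted lexle (map fst l) ->
  (forall y, y \in map fst l -> hbar <= lcp x y) ->
  ins x hbar hbar (rev l) [::] 0 0 = (res, c', s') ->
  [/\ perm_eq (map fst res) (x :: map fst l), sorted lexle (map fst res),
   okarr None res,
   c' + Lsum (map fst l) <= size l + Lsum (map fst res)
   & c' <= size l + \max_(y <- map fst l) lcp x y /\ s' <= (size l).+1].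
Proof.
case/lastP: l => [|A [u e]] ok so hyp.
  by case=> <- <- <-.
rewrite rev_rcons /=.
have LE : forall a b : nat, (a < b)%O = (a < b)%N by [].
rewrite !LE ltnn.
have uin : u \in map fst (rcons A (u, e)) by rewrite map_rcons mem_rcons inE eqxx.
have hxu := hyp u uin.
have [e1 e2] := lcp_drop hxu.
have mx : lcp x u <= \max_(y <- map fst (rcons A (u, e))) lcp x y.
  exact: (@leq_bigmax_seq _ _ xpredT (fun y => lcp x y) u uin isT).
rewrite cmpsuf_spec e1 e2.
have sz : size (rcons A (u, e)) = (size A).+1 by rewrite size_rcons.
case: ifP => ux.
- case=> <- <- <-.
  rewrite rev_cons revK -cats1 -catA /=.
  have hh : hbar + (lcp x u - hbar) = lcp u x by rewrite (lcpC u x); clear -hxu; lia.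
  rewrite hh.
  move: ok so; rewrite -cats1 !okarr_cat !map_cat !sorted_cat_cons /= !andbT.
  move=> -> ->; rewrite ux eqxx /=.
  rewrite map_rcons -cats1 in mx.
  set A' := [seq i.1 | i <- A].
  have -> : A' ++ [:: u; x] = rcons (A' ++ [:: u]) x by rewrite -cats1 -catA.
  rewrite perm_rcons perm_refl size_cat /=; split => //.
  + rewrite -cats1 -catA /= !Lsum_split /= (lcpC u x); clear; lia.
  + split; last by clear; lia.
    by move: mx; rewrite /= -/A' => mx; lia.
- move=> E.
  have xu : lexle x u by apply: lexle_totalN; rewrite ux.
  have hh : hbar + (lcp x u - hbar) = lcp x u by clear -hxu; lia.
  have okl : okarr None (rev (rev A) ++ [:: (u, e)]) by rewrite revK cats1.
  have sol : sorted lexle (map fst (rev (rev A) ++ [:: (u, e)])) by rewrite revK cats1.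
  have c1 : (lcp x u - hbar).+1 <= hbar + (lcp x u - hbar) + 1 by clear; lia.
  have c2 : 1 + size (rev A) = size (rev (rev A) ++ [:: (u, e)]).
    by rewrite revK size_rev size_cat addnC.
  have hge : forall u' e' rl', rev A = (u', e') :: rl' -> odflt 0 e = lcp u' u.
    move=> u' e' rl' EA; move: ok.
    rewrite -(revK A) EA rev_cons -cats1 cat_rcons okarr_cat /=.
    by case/andP=> _ /andP[/eqP -> _].
  have := ins_ok (erefl [:: (u, e)]) okl sol xu hh hge c1 c2 E.
  rewrite revK cats1 /= => -[]// r1 r2 r3 r4 [[y yin hy] [r5 r6]].
  split => //; split => //.
  apply: (leq_trans hy); rewrite leq_add2l.
  exact: (@leq_bigmax_seq _ _ xpredT (fun y => lcp x y) y yin isT).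
Qed.

Definition Dpre (p : seq str) : nat :=
  \sum_(0 <= i < size p) (\max_(0 <= j < i) lcp (nth [::] p i) (nth [::] p j)).+1.

Lemma Dpre_rcons p x :
  Dpre (rcons p x) = Dpre p + (\max_(0 <= j < size p) lcp x (nth [::] p j)).+1.
Proof.
rewrite /Dpre size_rcons big_nat_recr //= nth_rcons ltnn eqxx.
congr (_ + _.+1).
  apply: eq_big_nat => i /andP[_ hi]; rewrite nth_rcons hi; congr _.+1.
  by apply: eq_big_nat => j /andP[_ hj]; rewrite nth_rcons (ltn_trans hj hi).
by apply: eq_big_nat => j /andP[_ hj]; rewrite nth_rcons hj.
Qed.

Lemma max_mem (p : seq str) x y :
  y \in p -> lcp x y <= \max_(0 <= j < size p) lcp x (nth [::] p j).
Proof.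
move=> yp.
have := @leq_bigmax_seq _ (index_iota 0 (size p)) xpredT
  (fun j => lcp x (nth [::] p j)) (index y p).
rewrite mem_index_iota /= index_mem yp nth_index //; move/(_ isT isT).
by rewrite big_nat.
Qed.

Lemma Dpre_le (ss : seq str) : Dpre ss <= Dsize ss.
Proof.
rewrite /Dpre /Dsize big_mkord; apply: leq_sum => i _; rewrite ltnS.
rewrite big_nat; apply/bigmax_leqP_seq => j; rewrite mem_index_iota => /andP[_ ji] _.
have jn : j < size ss := ltn_trans ji (ltn_ord i).
have neq : Ordinal jn != i by rewrite -val_eqE /= neq_ltn ji.
exact: (@leq_bigmax_cond _ (fun k : 'I_(size ss) => k != i)
  (fun k : 'I_(size ss) => lcp (nth [::] ss i) (nth [::] ss k)) (Ordinal jn) neq).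
Qed.

Lemma tri N : N + (N * (N - 1)) %/ 2 = (N.+1 * (N.+1 - 1)) %/ 2.
Proof.
have -> : N.+1 * (N.+1 - 1) = N * 2 + N * (N - 1) by case: N => // n; rewrite !subSS !subn0; nia.
by rewrite divnMDl.
Qed.

Lemma fold_ok hbar (r : seq str) : forall (p : seq str) (l : seq (str * option nat)) c s (res : seq (str * option nat)) c' s',
  (forall x y, x \in p ++ r -> y \in p ++ r -> hbar <= lcp x y) ->
  perm_eq (map fst l) p -> sorted lexle (map fst l) -> okarr None l ->
  c <= Lsum (map fst l) + (size p * (size p - 1)) %/ 2 ->
  c + s <= Dpre p + size p ^ 2 ->
  foldl (isort_step hbar) (l, c, s) r = (res, c', s') ->
  [/\ perm_eq (map fst res) (p ++ r), sorted lexle (map fst res), okarr None res,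
      c' <= Lsum (map fst res) + (size (p ++ r) * (size (p ++ r) - 1)) %/ 2
    & c' + s' <= Dpre (p ++ r) + size (p ++ r) ^ 2].
Proof.
elim: r => [|x r IH] p l c s res c' s' hyp pe so ok hc hcs /=.
  by case=> <- <- <-; rewrite cats0.
rewrite {1}/isort_step.
case E: (ins x hbar hbar (rev l) [::] 0 0) => [[l' c0] s0].
have hx : forall y, y \in map fst l -> hbar <= lcp x y.
  move=> y yl; apply: hyp; first by rewrite mem_cat inE eqxx orbT.
  by rewrite mem_cat -(perm_mem pe) yl.
have [r1 r2 r3 r4 [r5 r6]] := first_ok ok so hx E.
have szl : size l = size p by rewrite -(size_map fst) (perm_size pe).
have mx : \max_(y <- map fst l) lcp x y <= \max_(0 <= j < size p) lcp x (nth [::] p j).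
  apply/bigmax_leqP_seq => y yl _; apply: max_mem; by rewrite -(perm_mem pe).
rewrite -cat_rcons; apply: IH.
- by move=> a b; rewrite cat_rcons; apply: hyp.
- by rewrite perm_sym perm_rcons perm_sym (perm_trans r1) // perm_cons.
- exact: r2.
- exact: r3.
- rewrite size_rcons -tri; rewrite szl in r4; clear -hc r4; move: hc; set D := (_ %/ 2) => hc; clearbody D; lia.
- rewrite size_rcons Dpre_rcons; rewrite szl in r5 r6.
  move: hcs r5 r6 mx; clear; nia.
Qed.

End S.

Theorem mainTheorem6 :
  exists K : nat,
  forall (disp : Order.disp_t) (T : orderType disp) (hbar : nat)
         (ss : seq (seq T)),
    (forall x y, x \in ss -> y \in ss -> hbar <= lcp x y) ->
    let: (out, comps, steps) := lcp_isort hbar ss in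
    let n := size ss in
    [/\ perm_eq (map fst out) ss,
        sorted lexle (map fst out),
        map snd out = lcp_array (map fst out),
        comps <= Lsum (map fst out) + (n * (n - 1)) %/ 2
      & comps + steps <= K * (Dsize ss + n ^ 2)].
Proof.
exists 1 => disp T hbar ss hyp.
rewrite /lcp_isort.
case E: (foldl _ _ _) => [[out comps] steps].
have := @fold_ok disp T hbar ss [::] [::] 0 0 out comps steps hyp (perm_refl _) isT isT
  (leq0n _) (leq0n _) E.
case=> r1 r2 r3 r4 r5; split => //.
- by apply/okarrE.
- rewrite mul1n; apply: (leq_trans r5); rewrite leq_add2r; exact: Dpre_le.
Qed.
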